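(* Let $n,k,\bar k,\bar m$ be integers with $\bar k\ge2$, $\bar m\ge 2$, $\bar m\binom{\bar k}{2}=\binom{k}{2}$ and $\bar m\bar k\le n$. Let $A$ be a network (of the type below) on $\{1,\dots,n\}$ consisting of $\bar m$ pairwise disjoint mini fully connected networks each on $\bar k$ nodes (all pairs within each block linked, no other links), the remaining $n-\bar m\bar k$ nodes isolated; and let $B$ be a network consisting of one mini fully connected network on $k$ nodes and $n-k$ isolated nodes. Then (both networks have the same number of links and) $$\sum_{i=1}^n\Delta_i(A)\le\sum_{i=1}^n\Delta_i(B).$$
   Context: Version-age model. A gossip network on a finite node set $\mathcal N$ is specified by source rates $\lambda_{0j}>0$ and gossip rates $\lambda_{ij}\ge 0$ ($i\neq j$; rate at which $i$ sends to $j$); $\lambda_s>0$ is the source's update rate. For nonempty $S\subseteq\mathcal N$ let $N(S)=\{i\in\mathcal N\setminus S:\ \sum_{j\in S}\lambda_{ij}>0\}$ and define $$\Delta_S=\frac{\lambda_s+\sum_{i\in N(S)}\big(\sum_{j\in S}\lambda_{ij}\big)\Delta_{S\cup\{i\}}}{\sum_{j\in S}\lambda_{0j}+\sum_{i\in N(S)}\sum_{j\in S}\lambda_{ij}}$$ (well defined by downward induction on $|S|$); $\Delta_i=\Delta_{\{i\}}$, and $\Delta_i(G)$ denotes this quantity in network $G$. Networks with uniform link rate: node set $\{1,\dots,n\}$, $\lambda_{0j}=\lambda/n$ for all $j$, and a set of links (unordered pairs of distinct nodes); for each link $\{a,b\}$, $\lambda_{ab}=\lambda_{ba}=\lambda/n$,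 and $\lambda_{ab}=0$ otherwise. A node with no links is isolated. *)

(* Defs.v *)
From mathcomp Require Import all_boot all_order all_algebra.
Set Implicit Arguments. Unset Strict Implicit. Unset Printing Implicit Defensive.
Import Order.TTheory GRing.Theory Num.Theory.
Local Open Scope ring_scope.

Section VersionAge.
Variables (R : realFieldType) (n : nat).
(* A general gossip network on nodes 'I_n (node i+1 of the paper is i).
   lam0 j = lambda_{0j}, lam i j = lambda_{ij}, lams = lambda_s. *)
Variables (lam0 : 'I_n -> R) (lam : 'I_n -> 'I_n -> R) (lams : R).

Definition Nbhd (S : {set 'I_n}) : {set 'I_n} :=
  [set i | (i \notin S) && (0 < \sum_(j in S) lam i j)].

(* Downward recursion on |S|, implemented with fuel; fuel n - |S| + 1 suffices
   since every recursive call adds a new element to S. *)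
Fixpoint Delta_fuel (fuel : nat) (S : {set 'I_n}) : R :=
  match fuel with
  | 0%N => 0
  | f.+1 =>
      (lams + \sum_(i in Nbhd S) (\sum_(j in S) lam i j) * Delta_fuel f (i |: S))
      / (\sum_(j in S) lam0 j + \sum_(i in Nbhd S) \sum_(j in S) lam i j)
  end.

Definition DeltaS (S : {set 'I_n}) : R := Delta_fuel (n - #|S|).+1 S.

Definition Delta_node (i : 'I_n) : R := DeltaS [set i].
End VersionAge.

Definition unif_lam0 (R : realFieldType) (n : nat) (lambda : R) : 'I_n -> R :=
  fun _ => lambda / n%:R.
Definition unif_lam (R : realFieldType) (n : nat) (lambda : R) (e : rel 'I_n)
  : 'I_n -> 'I_n -> R :=
  fun i j => if e i j then lambda / n%:R else 0.

Definition Delta_unif (R : realFieldType) (n : nat) (lambda lams : R)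
  (e : rel 'I_n) (i : 'I_n) : R :=
  @Delta_node R n (@unif_lam0 R n lambda) (@unif_lam R n lambda e) lams i.

(* Main.v *)
Require Import Defs.
From mathcomp Require Import all_boot all_order all_algebra.
From mathcomp Require Import ring lra zify.
Set Implicit Arguments. Unset Strict Implicit. Unset Printing Implicit Defensive.
Import Order.TTheory GRing.Theory Num.Theory.
Local Open Scope ring_scope.


Definition Hn (R : realFieldType) (t : nat) : R := \sum_(j < t) (j.+1%:R)^-1.

Section Clique.
Variables (R : realFieldType) (n : nat) (c lams : R) (lam : 'I_n -> 'I_n -> R) (Q : {set 'I_n}).
Hypothesis hc : 0 < c.
Hypothesis hlam : forall i j, j \in Q -> lam i j = if (i \in Q) && (i != j) then c else 0.

Lemma sum_lam (S : {set 'I_n}) i : S \subset Q -> i \notin S ->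
  \sum_(j in S) lam i j = if i \in Q then c * #|S|%:R else 0.
Proof.
move=> sSQ iS.
have E : forall j, j \in S -> lam i j = (if i \in Q then c else 0).
  move=> j jS; rewrite (hlam i (subsetP sSQ j jS)).
  have -> : i != j by apply/eqP => ij; rewrite ij jS in iS.
  by rewrite andbT.
rewrite (eq_bigr _ E) sumr_const.
by case: (i \in Q); rewrite ?mul0rn // mulr_natr.
Qed.

Lemma Nbhd_eq (S : {set 'I_n}) : S \subset Q -> (0 < #|S|)%N -> Nbhd lam S = Q :\: S.
Proof.
move=> sSQ S0; apply/setP => i; rewrite !inE.
case iS: (i \in S) => //=.
rewrite sum_lam ?iS //; case: (i \in Q); last by rewrite ltxx.
by rewrite mulr_gt0 // ltr0n.
Qed.

Lemma HnS t : Hn R t.+1 = Hn R t + (t.+1%:R)^-1.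
Proof. by rewrite /Hn big_ord_recr. Qed.

Lemma clique_val d : forall t (S : {set 'I_n}), S \subset Q -> #|S| = t.+1 -> #|Q| = (t.+1 + d)%N ->
  Delta_fuel (fun _ => c) lam lams (n - t.+1).+1 S
  = lams / c * (Hn R (t.+1 + d) - Hn R t) / (d.+1)%:R.
Proof.
have cn0 : c != 0 by rewrite gt_eqF.
have nz : forall m : nat, (1 + m%:R : R) != 0 by move=> m; rewrite addrC natr1 pnatr_eq0.
elim: d => [|d IH] t S sSQ cS cQ.
  have SQ : S = Q by apply/eqP; rewrite eqEcard sSQ cS cQ addn0 leqnn.
  rewrite /= Nbhd_eq ?cS // SQ setDv !big_set0 addr0 sumr_const addn0 HnS.
  have t0 : (t.+1%:R : R) != 0 by rewrite pnatr_eq0.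
  by rewrite -mulr_natr cQ addn0 addr0; field; rewrite nz cn0.
rewrite /=.
rewrite Nbhd_eq ?cS //.
have ltn : (t.+1 < n)%N.
  apply: (@leq_trans #|Q|); first by rewrite cQ addnS ltnS leq_addr.
  by have := max_card (mem Q); rewrite card_ord.
rewrite -(subnSK ltn).
rewrite (eq_bigr (fun _ => (c * t.+1%:R) * (lams / c * (Hn R (t.+2 + d) - Hn R t.+1) / (d.+1)%:R))); last first.
  move=> i; rewrite !inE => /andP [iS iQ].
  rewrite sum_lam // iQ cS; congr (_ * _).
  rewrite IH //.
  - by rewrite subUset sub1set iQ.
  - by rewrite cardsU1 iS cS.
  - by rewrite cQ; lia.
rewrite [X in _ / (_ + X)](eq_bigr (fun _ => c * t.+1%:R)); last first.
  move=> i; rewrite !inE => /andP [iS iQ]; by rewrite sum_lam // iQ cS.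
rewrite !sumr_const.
have -> : #|Q :\: S| = d.+1.
  by rewrite cardsD (setIidPr sSQ) cQ cS addKn.
rewrite cS -addSnnS HnS.
have t0 : (t.+1%:R : R) != 0 by rewrite pnatr_eq0.
have d0 : (d.+1%:R : R) != 0 by rewrite pnatr_eq0.
have d1 : (d.+2%:R : R) != 0 by rewrite pnatr_eq0.
field.
have ht : (0:R) <= t%:R := ler0n _ _.
have hd : (0:R) <= d%:R := ler0n _ _.
have hct : 0 < c * (1 + t%:R) by rewrite mulr_gt0 // ltr_pwDl.
by apply/and5P; split; apply: lt0r_neq0; nra.
Qed.

Lemma node_val i : i \in Q ->
  Delta_node (fun _ => c) lam lams i = lams / c * Hn R #|Q| / #|Q|%:R.
Proof.
move=> iQ.
have Q0 : (0 < #|Q|)%N by apply/card_gt0P; exists i.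
rewrite /Delta_node /DeltaS cards1.
have cQ : #|Q| = (1 + #|Q|.-1)%N by rewrite add1n prednK.
rewrite (@clique_val #|Q|.-1 0 [set i]) ?sub1set ?cards1 //.
by rewrite -cQ /Hn big_ord0 subr0 prednK.
Qed.
End Clique.


Section Ineq.
Variable R : realFieldType.
Definition ff (b : nat) : R := b%:R - Hn R b.
Definition BB (b : nat) : R := ('C(b, 2))%:R.

Lemma yfacts b : let y := (b%:R / b.+1%:R : R) in y * b.+1%:R = b%:R /\ 0 <= y /\ y <= 1.
Proof.
move=> y; have b0 : (b.+1%:R : R) != 0 by rewrite pnatr_eq0.
have bp : (0 : R) < b.+1%:R by rewrite ltr0n.
split; first by rewrite /y mulfVK.
split; first by rewrite /y divr_ge0.
by rewrite /y ler_pdivrMr // mul1r ler_nat.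
Qed.

Lemma ffS b : ff b.+1 = ff b + b%:R / b.+1%:R.
Proof.
rewrite /ff HnS.
have b0 : (b.+1%:R : R) != 0 by rewrite pnatr_eq0.
rewrite -natr1; field; by rewrite natr1.
Qed.

Lemma ff_ge0 b : 0 <= ff b.
Proof.
elim: b => [|b IH]; first by rewrite /ff /Hn big_ord0 subr0.
rewrite ffS; have [_ [y0 _]] := yfacts b; exact: addr_ge0.
Qed.

Lemma BBS b : BB b.+1 = BB b + b%:R.
Proof. by rewrite /BB binS bin1 natrD. Qed.

Lemma Blow b : BB b <= b.+1%:R * ff b.
Proof.
elim: b => [|b IH]; first by rewrite /BB /ff /Hn big_ord0 subr0 mulr0 bin0n.
rewrite BBS ffS; have [hy [y0 y1]] := yfacts b.
move: hy y0 y1 IH; set y := (b%:R / b.+1%:R : R) => hy y0 y1 IH.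
have f0 := ff_ge0 b.
rewrite -!natr1 in hy IH *.
nra.
Qed.

Lemma ratio b : ff b.+1 * BB b <= ff b * BB b.+1.
Proof.
rewrite BBS ffS; have [hy [y0 y1]] := yfacts b.
move: hy y0 y1; set y := (b%:R / b.+1%:R : R) => hy y0 y1.
have IH := Blow b; have f0 := ff_ge0 b.
have B0 : 0 <= BB b by rewrite /BB ler0n.
rewrite -!natr1 in hy IH *.
nra.
Qed.

Lemma BBpos b : (2 <= b)%N -> 0 < BB b.
Proof. by move=> hb; rewrite /BB ltr0n bin_gt0. Qed.

Lemma chain a d : (2 <= a)%N -> ff (a + d) * BB a <= ff a * BB (a + d).
Proof.
move=> ha; elim: d => [|d IH]; first by rewrite addn0.
rewrite addnS.
have p1 := BBpos ha.
have p2 : 0 < BB (a + d) by apply: BBpos; rewrite (leq_trans ha) ?leq_addr.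
have r := ratio (a + d).
have f0 := ff_ge0 a; have f1 := ff_ge0 (a+d); have f2 := ff_ge0 (a+d).+1.
have B3 : 0 <= BB (a + d).+1 by rewrite /BB ler0n.
rewrite -(ler_pM2r p2).
have s1 : ff (a + d).+1 * BB a * BB (a + d) <= ff (a + d) * BB a * BB (a + d).+1.
  by rewrite mulrAC [X in _ <= X]mulrAC ler_pM2r.
apply: (le_trans s1).
by rewrite [X in _ <= X]mulrAC; exact: ler_wpM2r.
Qed.
End Ineq.


Lemma node_val_e (R : realFieldType) (n : nat) (lambda lams : R) (e : rel 'I_n)
  (Q : {set 'I_n}) i : 0 < lambda / n%:R -> i \in Q ->
  (forall i' j, j \in Q -> e i' j = (i' \in Q) && (i' != j)) ->
  Delta_unif lambda lams e i = lams / (lambda / n%:R) * Hn R #|Q| / #|Q|%:R.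
Proof.
move=> hc iQ he; rewrite /Delta_unif.
apply: (@node_val R n (lambda / n%:R) lams _ Q hc) => // i' j jQ.
by rewrite /unif_lam he.
Qed.

Lemma iso_val (R : realFieldType) (n : nat) (lambda lams : R) (e : rel 'I_n) i :
  0 < lambda / n%:R -> (forall i', e i' i = false) ->
  Delta_unif lambda lams e i = lams / (lambda / n%:R).
Proof.
move=> hc he; rewrite (@node_val_e _ _ _ _ _ [set i]) ?set11 //.
  by rewrite cards1 /Hn big_ord1 invr1 !mulr1.
move=> i' j; rewrite !inE => /eqP ->; by rewrite he andbN.
Qed.

Lemma sum_if (R : realFieldType) n (A : {set 'I_n}) (x y : R) :
  \sum_(i < n) (if i \in A then x else y) = #|A|%:R * x + (n - #|A|)%:R * y.
Proof.
rewrite (bigID (mem A)) /=.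
rewrite (eq_bigr (fun _ => x)); last by move=> i ->.
rewrite [X in _ + X](eq_bigr (fun _ => y)); last by move=> i /negbTE ->.
rewrite !sumr_const !mulr_natl; congr (_ *+ _ + _ *+ _).
have := cardsC A; rewrite card_ord => h.
have -> : (n - #|A| = #|~: A|)%N by lia.
by apply: eq_card => i; rewrite !inE.
Qed.

Unset Implicit Arguments.
Theorem mainTheorem12 (R : realFieldType) (lambda lams : R)
  (n k kbar mbar : nat)
  (hlam : 0 < lambda) (hlams : 0 < lams)
  (hkbar : (2 <= kbar)%N) (hmbar : (2 <= mbar)%N)
  (hbin : (mbar * 'C(kbar, 2) = 'C(k, 2))%N)
  (hn : (mbar * kbar <= n)%N)
  (P : 'I_mbar -> {set 'I_n})
  (hPcard : forall b, #|P b| = kbar)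
  (hPdisj : forall b b', b != b' -> [disjoint P b & P b'])
  (eA : rel 'I_n)
  (heA : forall i j, eA i j = (i != j) && [exists b, (i \in P b) && (j \in P b)])
  (C : {set 'I_n}) (hC : #|C| = k)
  (eB : rel 'I_n)
  (heB : forall i j, eB i j = [&& i != j, i \in C & j \in C]) :
  \sum_(i < n) Delta_unif lambda lams eA i <= \sum_(i < n) Delta_unif lambda lams eB i.
Proof.
have n0 : (0 < n)%N.
  by apply: leq_trans hn; rewrite muln_gt0 (leq_trans _ hkbar) ?(leq_trans _ hmbar).
have hc : 0 < lambda / n%:R by rewrite divr_gt0 // ltr0n.
set L := lams / (lambda / n%:R).
have L0 : 0 < L by rewrite divr_gt0.
set cover := \bigcup_b P b.
have Pin : forall b b' j, j \in P b -> j \in P b' -> b = b'.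
  move=> b b' j jb jb'; apply/eqP; apply/negPn/negP => /hPdisj H.
  by rewrite (disjointFr H jb) in jb'.
have valA : forall i, Delta_unif lambda lams eA i =
    if i \in cover then L * Hn R kbar / kbar%:R else L.
  move=> i; case: ifP => /bigcupP ic.
    case: ic => b _ ib.
    rewrite (@node_val_e _ _ _ _ _ (P b)) // ?hPcard //.
    move=> i' j jb; rewrite heA andbC; congr (_ && _).
    apply/existsP/idP => [[b' /andP [i'b' jb']]|i'b]; last by exists b; rewrite i'b jb.
    by rewrite (Pin _ _ _ jb jb').
  apply: iso_val => // i'; rewrite heA.
  case: existsP => [[b /andP [_ ib]]|]; last by rewrite andbF.
  by exfalso; apply: ic; exists b.
have valB : forall i, Delta_unif lambda lams eB i =
    if i \in C then L * Hn R k / k%:R else L.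
  move=> i; case: ifP => iC.
    rewrite (@node_val_e _ _ _ _ _ C) // ?hC //.
    move=> i' j jC; rewrite heB jC andbT andbC //.
  by apply: iso_val => // i'; rewrite heB iC !andbF.
have ccov : #|cover| = (mbar * kbar)%N.
  rewrite -sum1_card (partition_disjoint_bigcup addn (fun _ => 1%N) hPdisj).
  rewrite (eq_bigr (fun _ => kbar)); last by move=> b _; rewrite sum1_card hPcard.
  by rewrite sum_nat_const card_ord.
have hk : (k <= n)%N by rewrite -hC; have := max_card (mem C); rewrite card_ord.
have hkk : (kbar <= k)%N.
  rewrite leqNgt; apply/negP => lt.
  have := leq_bin2l 2 (ltnW lt); rewrite -hbin.
  have : (0 < 'C(kbar, 2))%N by rewrite bin_gt0.
  move: hmbar; set z := 'C(kbar, 2); nia.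
have key : ff R k <= mbar%:R * ff R kbar.
  have := chain R (k - kbar) hkbar; rewrite subnKC //.
  rewrite /BB -hbin natrM mulrA => h.
  by rewrite -(ler_pM2r (BBpos R hkbar)) /BB (mulrC (mbar%:R)).
rewrite (eq_bigr _ (fun i _ => valA i)) (eq_bigr _ (fun i _ => valB i)) !sum_if ccov hC.
rewrite !natrB // natrM.
have kb0 : (kbar%:R : R) != 0 by rewrite pnatr_eq0 -lt0n (leq_trans _ hkbar).
have k0 : (k%:R : R) != 0 by rewrite pnatr_eq0 -lt0n (leq_trans _ (leq_trans hkbar hkk)).
have e1 : mbar%:R * kbar%:R * (L * Hn R kbar / kbar%:R) = mbar%:R * L * Hn R kbar by field.
have e2 : k%:R * (L * Hn R k / k%:R) = L * Hn R k by field.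
rewrite e1 e2.
move: key; rewrite /ff => key.
have hk2 : 0 <= mbar%:R * (kbar%:R - Hn R kbar) - (k%:R - Hn R k) by rewrite subr_ge0.
have := mulr_ge0 (ltW L0) hk2.
nra.
Qed.
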